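(* Let $Y_1,\dots,Y_k\in\{0,1\}$ be independent unbiased Bernoulli random variables (each equal to $1$ with probability $1/2$), let $a_1,\dots,a_k\geq 0$ be reals, and let $X=\sum_{i=1}^k a_iY_i$ with mean $\mu=\mathbb{E}[X]$ and standard deviation $\sigma=\sqrt{\mathrm{Var}(X)}$. Then for every $c\in[0,1]$, $$\Pr(X\geq\mu+c\sigma)\geq\frac{(1-c)^2}{4}.$$ *)

(* Defs.v *)
(* the joint law of k independent unbiased Bernoulli
   variables is the uniform probability on the cube {0,1}^k. *)
From HB Require Import structures.
From mathcomp Require Import all_boot all_order all_algebra.
From mathcomp Require Import reals.
Set Implicit Arguments. Unset Strict Implicit. Unset Printing Implicit Defensive.
Import Order.TTheory GRing.Theory Num.Theory.
Local Open Scope ring_scope.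

Definition cube (k : nat) := {ffun 'I_k -> bool}.

Definition Pr {R : realType} (k : nat) (E : pred (cube k)) : R :=
  #|[set w : cube k | E w]|%:R / #|{: cube k}|%:R.

Definition Ex {R : realType} (k : nat) (Z : cube k -> R) : R :=
  (\sum_(w : cube k) Z w) / #|{: cube k}|%:R.

Definition Xsum {R : realType} (k : nat) (a : 'I_k -> R) (w : cube k) : R :=
  \sum_(i < k) a i * (w i)%:R.

Definition meanX {R : realType} (k : nat) (a : 'I_k -> R) : R := Ex (Xsum a).

Definition varX {R : realType} (k : nat) (a : 'I_k -> R) : R :=
  Ex (fun w => (Xsum a w - meanX a) ^+ 2).

Definition sdX {R : realType} (k : nat) (a : 'I_k -> R) : R := Num.sqrt (varX a).

(* Main.v *)
Require Import Defs.
From HB Require Import structures.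
From mathcomp Require Import all_boot all_order all_algebra.
From mathcomp Require Import reals ring lra.
Set Implicit Arguments. Unset Strict Implicit. Unset Printing Implicit Defensive.
Import Order.TTheory GRing.Theory Num.Theory.
Local Open Scope ring_scope.

Definition sg {R : realType} (x : bool) : R := if x then 1 else -1.
Definition Zf {R : realType} k (b : 'I_k -> R) (w : cube k) : R :=
  \sum_(i < k) b i * sg (w i).
Definition Nc {R : realType} k (b : 'I_k -> R) (t : R) : R :=
  \sum_(w : cube k) (if t <= Zf b w then 1 else 0).
Definition Sq {R : realType} k (b : 'I_k -> R) : R := \sum_(i < k) b i ^+ 2.
Definition fcons k (x : bool) (w : cube k) : cube k.+1 :=
  [ffun i : 'I_k.+1 => if unlift ord0 i is Some j then w j else x].
Definition tl {R : Type} k (b : 'I_k.+1 -> R) : 'I_k -> R := fun j => b (lift ord0 j).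

Lemma fcons0 k x (w : cube k) : fcons x w ord0 = x.
Proof. by rewrite /fcons ffunE unlift_none. Qed.
Lemma fconsS k x (w : cube k) j : fcons x w (lift ord0 j) = w j.
Proof. by rewrite /fcons ffunE liftK. Qed.

Lemma sum_cube_split {R : realType} k (F : cube k.+1 -> R) :
  \sum_(w : cube k.+1) F w = \sum_(w : cube k) (F (fcons true w) + F (fcons false w)).
Proof.
pose h (p : bool * cube k) := fcons p.1 p.2.
pose g (w : cube k.+1) := (w ord0, [ffun j => w (lift ord0 j)] : cube k).
have hK : cancel g h.
  move=> w; apply/ffunP => i; rewrite /h /g /fcons /= ffunE.
  by case: unliftP => [j ->|->]; rewrite ?ffunE.
have gK : cancel h g.
  case=> x w; rewrite /h /g /= fcons0; congr pair; apply/ffunP => j.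
  by rewrite ffunE fconsS.
rewrite (reindex h); last by exists g => ? _.
rewrite -(pair_big xpredT xpredT (fun x w => F (fcons x w))) /= big_bool /=.
by rewrite -big_split.
Qed.

Lemma card_cube k : #|{: cube k}| = (2 ^ k)%N.
Proof. by rewrite /cube card_ffun card_bool card_ord. Qed.

Lemma sum_cube_const {R : realType} k (x : R) : \sum_(w : cube k) x = 2 ^+ k * x.
Proof. by rewrite sumr_const card_cube -(mulr_natl x (2 ^ k)) natrX. Qed.

Lemma Zf_fcons {R : realType} k (b : 'I_k.+1 -> R) x w :
  Zf b (fcons x w) = b ord0 * sg x + Zf (tl b) w.
Proof.
rewrite /Zf big_ord_recl fcons0; congr (_ + _).
by apply: eq_bigr => j _; rewrite fconsS.
Qed.

Lemma Zf0 {R : realType} (b : 'I_0 -> R) w : Zf b w = 0.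
Proof. by rewrite /Zf big_ord0. Qed.

Lemma Sq_rec {R : realType} k (b : 'I_k.+1 -> R) : Sq b = b ord0 ^+ 2 + Sq (tl b).
Proof. by rewrite /Sq big_ord_recl. Qed.

Lemma Sq_ge0 {R : realType} k (b : 'I_k -> R) : 0 <= Sq b.
Proof. by apply: sumr_ge0 => i _; apply: sqr_ge0. Qed.

Lemma Nc_rec {R : realType} k (b : 'I_k.+1 -> R) t :
  Nc b t = Nc (tl b) (t - b ord0) + Nc (tl b) (t + b ord0).
Proof.
rewrite /Nc sum_cube_split -big_split; apply: eq_bigr => w _ /=.
rewrite !Zf_fcons /sg mulr1 mulrN1 -[t <= b ord0 + _]lerBlDl -[t <= - _ + _]lerBlDl opprK.
by [].
Qed.

Lemma Nc_ge0 {R : realType} k (b : 'I_k -> R) t : 0 <= Nc b t.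
Proof. by apply: sumr_ge0 => w _; case: ifP. Qed.

Lemma Nc_mono {R : realType} k (b : 'I_k -> R) t1 t2 : t1 <= t2 -> Nc b t2 <= Nc b t1.
Proof.
move=> h; apply: ler_sum => w _; case: ifP => h2; case: ifP => h1 //.
by rewrite (le_trans h h2) in h1.
Qed.

Lemma Nc_sym {R : realType} k (b : 'I_k -> R) u : 2 ^+ k <= Nc b (- u) + Nc b u.
Proof.
elim: k b u => [|k IH] b u.
  have e t : Nc b t = (if t <= 0 then 1 else 0).
    rewrite /Nc (eq_bigr (fun _ => if t <= 0 then 1 else 0)) ?sum_cube_const ?expr0 ?mul1r //.
    by move=> w _; rewrite Zf0.
  rewrite !e expr0 oppr_le0; case: (lerP u 0) => hu.
    by case: ifP => _; lra.
  by rewrite (ltW hu); lra.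
rewrite !Nc_rec exprS.
have h1 := IH (tl b) (u + b ord0).
have h2 := IH (tl b) (u - b ord0).
rewrite opprD in h1; rewrite opprB in h2.
have e : - u + b ord0 = b ord0 - u by rewrite addrC.
rewrite -e in h2.
lra.
Qed.
Lemma algA (R : realType) (b s g c : R) : 0 <= b -> 0 <= s -> 0 <= g -> g^+2 = b^+2 + s^+2 ->
  0 <= c -> c <= 1 -> 2 * s * c * (g - s) <= b^+2 * (1 + c^+2).
Proof.
move=> hb hs hg hgs hc0 hc1.
have gs : s <= g by nra.
have e1 : (g - s) * (g + s) = b^+2 by rewrite -[b^+2]addr0 -(subrr (s^+2)) addrA -hgs; ring.
have h2 : 0 <= c * (g - s)^+2 by apply: mulr_ge0 => //; apply: sqr_ge0.
have h3 : 2 * s * c * (g - s) = c * ((g - s) * (g + s)) - c * (g - s)^+2 by ring.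
rewrite h3 e1.
have h4 : c * b^+2 <= b^+2 * (1 + c^+2) by nra.
lra.
Qed.

Lemma algB (R : realType) (b s g c : R) : 0 <= b -> 0 < s -> 0 <= g -> g^+2 = b^+2 + s^+2 ->
  0 <= c -> c <= 1 -> s < c * g + b ->
  2 * (1 - c)^+2 * s^+2 <= (s - c * g + b)^+2.
Proof.
move=> hb hs hg hgs hc0 hc1 hsc.
set d := 1 - c.
have hd0 : 0 <= d by rewrite /d; lra.
have gs : s <= g by nra.
have gsb : g <= s + b by nra.
set h := s + b - g. set q := g + b - s.
have hh : 0 <= h by rewrite /h; lra.
have dgq : d * g < q by rewrite /d /q; lra.
have dg0 : 0 <= d * g by apply: mulr_ge0.
have hq : 0 < q by lra.
have -> : s - c * g + b = h + d * g by rewrite /h /d; ring.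
have [case1|case2] := lerP (2 * s^+2) (g^+2).
  have : 2 * d^+2 * s^+2 <= (d * g)^+2.
    have : 0 <= d^+2 * (g^+2 - 2 * s^+2) by apply: mulr_ge0; [apply: sqr_ge0|lra].
    rewrite exprMn; lra.
  have : (d * g)^+2 <= (h + d * g)^+2 by nra.
  lra.
have sb : s^+2 + s * b <= 5/4 * g^+2.
  have hsq : 0 <= (s - 2 * b)^+2 := sqr_ge0 _.
  have e : (s - 2 * b)^+2 = s^+2 - 4 * s * b + 4 * b^+2 by ring.
  rewrite hgs; nra.
have k1 : s * q * (g + s) <= 5/4 * b * g * (g + s).
  have -> : s * q * (g + s) = b * (s * (g + s) + s * b).
    rewrite /q; have := hgs; move=> hgs'.
    have e : s * (g + b - s) * (g + s) = s * b * (g + s) + s * (g^+2 - s^+2) by ring.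
    rewrite e hgs; ring.
  have : s * (g + s) + s * b <= 5/4 * g * (g + s) by nra.
  nra.
have k2 : s * q <= 5/4 * b * g.
  have gp : 0 < g + s by lra.
  by rewrite -(ler_pM2r gp).
have sq0 : 0 <= s * q by apply: mulr_ge0; lra.
have K : 2 * q^+2 * s^+2 <= g^+2 * (h + q)^+2.
  have -> : h + q = 2 * b by rewrite /h /q; ring.
  nra.
set phi0 := g^+2 * h^+2.
set phi1 := g^+2 * (h + q)^+2 - 2 * q^+2 * s^+2.
have id : q * g^+2 * ((h + d * g)^+2 - 2 * d^+2 * s^+2) =
   (q - d * g) * phi0 + d * g * phi1 + q * (2 * s^+2 - g^+2) * (d * g) * (q - d * g).
  rewrite /phi0 /phi1; ring.
have p0 : 0 <= phi0 by rewrite /phi0; apply: mulr_ge0; apply: sqr_ge0.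
have p1 : 0 <= phi1 by rewrite /phi1; lra.
have t1 : 0 <= (q - d * g) * phi0 by apply: mulr_ge0 => //; lra.
have t2 : 0 <= d * g * phi1 by apply: mulr_ge0.
have t3 : 0 <= q * (2 * s^+2 - g^+2) * (d * g) * (q - d * g).
  apply: mulr_ge0; last lra. apply: mulr_ge0 => //. apply: mulr_ge0; lra.
have gp : 0 < g by nra.
have qg : 0 < q * g^+2 by apply: mulr_gt0 => //; apply: exprn_gt0.
have : 0 <= q * g^+2 * ((h + d * g)^+2 - 2 * d^+2 * s^+2) by rewrite id; lra.
rewrite pmulr_rge0 // subr_ge0.
have -> : 2 * d^+2 * s^+2 = 2 * (1 - c)^+2 * s^+2 by [].
done.
Qed.

Lemma main_ind {R : realType} k (b : 'I_k -> R) : (forall i, 0 <= b i) ->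
  forall c, 0 <= c -> c <= 1 -> (1 - c)^+2 * 2^+k <= 4 * Nc b (c * Num.sqrt (Sq b)).
Proof.
elim: k b => [|k IH] b hb c hc0 hc1.
  have -> : Sq b = 0 by rewrite /Sq big_ord0.
  rewrite sqrtr0 mulr0.
  have -> : Nc b 0 = 1.
    rewrite /Nc (eq_bigr (fun _ => 1)) ?sum_cube_const ?expr0 ?mul1r //.
    by move=> w _; rewrite Zf0 lexx.
  rewrite expr0; nra.
set b0 := b ord0. set s := Num.sqrt (Sq (tl b)). set g := Num.sqrt (Sq b).
have hb' : forall i, 0 <= tl b i by move=> i; exact: hb.
have hb0 : 0 <= b0 := hb ord0.
have hs : 0 <= s := sqrtr_ge0 _.
have hg : 0 <= g := sqrtr_ge0 _.
have hs2 : s^+2 = Sq (tl b) by rewrite sqr_sqrtr // Sq_ge0.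
have hgs : g^+2 = b0^+2 + s^+2 by rewrite /g sqr_sqrtr ?Sq_ge0 // Sq_rec hs2.
rewrite Nc_rec -/b0.
have -> : (2 ^+ k.+1 : R) = 2 * 2 ^+ k by rewrite exprS.
set t := c * g.
set P := (2 ^+ k : R).
have hP : 0 <= P by rewrite /P exprn_ge0.
have N1 := Nc_ge0 (tl b) (t - b0). have N2 := Nc_ge0 (tl b) (t + b0).
have [hbt|hbt] := lerP t b0.
  have m : Nc (tl b) 0 <= Nc (tl b) (t - b0) by apply: Nc_mono; lra.
  have sy := Nc_sym (tl b) 0; rewrite oppr0 in sy.
  have hc : (1 - c)^+2 <= 1 by nra.
  have : (1 - c)^+2 * (2 * P) <= 1 * (2 * P) by apply: ler_wpM2r; lra.
  rewrite -/P in sy; lra.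
have spos : 0 < s.
  rewrite lt_neqAle hs andbT; apply/eqP => s0.
  rewrite -s0 expr0n /= addr0 in hgs.
  have : g <= b0 by nra.
  rewrite /t in hbt; nra.
have sn0 : s != 0 by rewrite gt_eqF.
have gbs : g <= b0 + s by nra.
have tg : t <= g by rewrite /t; nra.
set c1 := (t - b0) / s.
have hc10 : 0 <= c1 by rewrite /c1 divr_ge0 //; lra.
have hc11 : c1 <= 1 by rewrite /c1 ler_pdivrMr // mul1r; lra.
have IH1 := IH (tl b) hb' c1 hc10 hc11.
rewrite -/s /c1 divfK // -/P in IH1.
have e1 : (1 - c1)^+2 = (s - t + b0)^+2 / s^+2.
  by rewrite -expr_div_n /c1; congr (_ ^+ 2); field.
rewrite e1 in IH1.
have s2pos : 0 < s^+2 by apply: exprn_gt0.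
have [hts|hts] := lerP (t + b0) s.
  set c2 := (t + b0) / s.
  have hc20 : 0 <= c2 by rewrite /c2 divr_ge0 //; lra.
  have hc21 : c2 <= 1 by rewrite /c2 ler_pdivrMr // mul1r; lra.
  have IH2 := IH (tl b) hb' c2 hc20 hc21.
  rewrite -/s /c2 divfK // -/P in IH2.
  have e2 : (1 - c2)^+2 = (s - t - b0)^+2 / s^+2.
    by rewrite -expr_div_n /c2; congr (_ ^+ 2); field.
  rewrite e2 in IH2.
  have A := algA hb0 hs hg hgs hc0 hc1.
  have key : 2 * (1 - c)^+2 <= (s - t + b0)^+2 / s^+2 + (s - t - b0)^+2 / s^+2.
    rewrite -mulrDl ler_pdivlMr //.
    rewrite /t; nra.
  have : 2 * (1 - c)^+2 * P <= ((s - t + b0)^+2 / s^+2 + (s - t - b0)^+2 / s^+2) * P.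
    by apply: ler_wpM2r.
  lra.
have B := algB hb0 spos hg hgs hc0 hc1 hts.
have key : 2 * (1 - c)^+2 <= (s - t + b0)^+2 / s^+2.
  by rewrite ler_pdivlMr.
have : 2 * (1 - c)^+2 * P <= (s - t + b0)^+2 / s^+2 * P by apply: ler_wpM2r.
lra.
Qed.

Lemma sumZ {R : realType} k (b : 'I_k -> R) : \sum_(w : cube k) Zf b w = 0.
Proof.
elim: k b => [|k IH] b.
  by rewrite (eq_bigr (fun _ => 0)) ?big1 // => w _; rewrite Zf0.
rewrite sum_cube_split (eq_bigr (fun w => 2 * Zf (tl b) w)).
  by rewrite -mulr_sumr IH mulr0.
by move=> w _; rewrite !Zf_fcons /sg; ring.
Qed.

Lemma sumZ2 {R : realType} k (b : 'I_k -> R) :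
  \sum_(w : cube k) Zf b w ^+ 2 = 2 ^+ k * Sq b.
Proof.
elim: k b => [|k IH] b.
  rewrite (eq_bigr (fun _ => 0)) ?big1 //; last by move=> w _; rewrite Zf0 expr0n.
  by rewrite /Sq big_ord0 mulr0.
rewrite sum_cube_split (eq_bigr (fun w => 2 * b ord0 ^+ 2 + 2 * Zf (tl b) w ^+ 2)).
  rewrite big_split /= sum_cube_const -mulr_sumr IH Sq_rec.
  have -> : (2 ^+ k.+1 : R) = 2 * 2 ^+ k by rewrite exprS.
  ring.
by move=> w _; rewrite !Zf_fcons /sg; ring.
Qed.

Theorem claim8p4 (R : realType) (k : nat) (a : 'I_k -> R)
  (ha : forall i, 0 <= a i) (c : R) (hc0 : 0 <= c) (hc1 : c <= 1) :
  (1 - c) ^+ 2 / 4 <= Pr [pred w | meanX a + c * sdX a <= Xsum a w].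
Proof.
pose b := fun i => a i / 2.
have hb : forall i, 0 <= b i by move=> i; rewrite /b divr_ge0.
pose m := \sum_(i < k) a i / 2.
have eX w : Xsum a w = Zf b w + m.
  rewrite /Xsum /Zf /m -big_split; apply: eq_bigr => i _ /=.
  by rewrite /b /sg; case: (w i) => /=; field.
have cardR : (#|{: cube k}|%:R : R) = 2 ^+ k by rewrite card_cube natrX.
have Pp : (0 : R) < 2 ^+ k by apply: exprn_gt0.
have hm : meanX a = m.
  rewrite /meanX /Ex cardR (eq_bigr (fun w => Zf b w + m)); last by move=> w _; rewrite eX.
  rewrite big_split /= sumZ sum_cube_const add0r mulrC mulKf //; exact: lt0r_neq0.
have hv : varX a = Sq b.
  rewrite /varX /Ex cardR hm (eq_bigr (fun w => Zf b w ^+ 2)); last first.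
    by move=> w _; rewrite eX addrK.
  rewrite sumZ2 mulrC mulKf //; exact: lt0r_neq0.
have hsd : sdX a = Num.sqrt (Sq b) by rewrite /sdX hv.
have hN : (#|[set w : cube k | [pred w | meanX a + c * sdX a <= Xsum a w] w]|%:R : R)
          = Nc b (c * Num.sqrt (Sq b)).
  rewrite -sum1_card natr_sum big_mkcond /=; apply: eq_bigr => w _.
  by rewrite inE /= hm hsd eX [Zf b w + m]addrC lerD2l.
rewrite /Pr hN cardR ler_pdivlMr //.
have := main_ind hb hc0 hc1.
lra.
Qed.
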